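(* Let $\mathcal K$ be a 2-category which admits Eilenberg–Moore constructions for monads, and let $(V,\psi):(t,\mu,\eta)\to(t',\mu',\eta')$ be a 1-cell in $\mathrm{EM}^w(\mathcal K)$. Then the 2-cell $Vv\epsilon\ast\psi v\ast\eta'Vv:Vv\Rightarrow Vv$ in $\mathcal K$ is idempotent, and the identities $V\mu\ast\psi t\ast\eta'Vt\ast\psi=\psi$ and $Vv\epsilon\ast\psi v\ast t'Vv\epsilon\ast t'\psi v\ast t'\eta'Vv=Vv\epsilon\ast\psi v$ hold.
   Context: Conventions in a 2-category $\mathcal K$: horizontal composition and whiskering by juxtaposition in the order of functor composition; identity 1-cell of $k$ written $k$, identity 2-cell of $V$ written $V$; vertical composition $\ast$ with $\alpha\ast\beta$ meaning $\beta$ then $\alpha$. A monad $(t,\mu,\eta)$ on $k$: $t:k\to k$, $\mu:tt\Rightarrow t$, $\eta:k\Rightarrow t$, associative and unital. A 1-cell $(t,\mu,\eta)\to(t',\mu',\eta')$ in $\mathrm{EM}^w(\mathcal K)$ ($t$ on $k$, $t'$ on $k'$) is a pair $(V,\psi)$ with $V:k\to k'$ and $\psi:t'V\Rightarrow Vt$ satisfying $V\mu\ast\psi t\ast t'\psi=\psi\ast\mu'V$. $\mathcal K$ admits Eilenberg–Moore constructions for monads means: the inclusion 2-functor from $\mathcal K$ into the Lack–Street 2-category $\mathrm{EM}(\mathcal K)$ of monads has a right 2-adjoint $J$. Consequently every monad $(t,\mu,\eta)$ on $k$ determines an adjunction $f\dashv v$ in $\mathcal K$ with $f:k\to J(t)$,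 $v:J(t)\to k$, unit $\eta:k\Rightarrow vf$ and counit $\epsilon:fv\Rightarrow J(t)$, such that $t=vf$ and $\mu=v\epsilon f$. For $t'$ the corresponding data are $f',v',\eta',\epsilon'$. *)

(* Defs.v *)
Set Implicit Arguments.
Unset Strict Implicit.

(** * Data of a (strict) 2-category.
    [comp1 g f] is g∘f (order of functor composition), [vcomp a b] is
    a ∗ b ("b then a"), [hcomp a b] is horizontal composition a b. *)
Record PreTwoCat := {
  Ob : Type;
  Hom : Ob -> Ob -> Type;
  Cell : forall {a b : Ob}, Hom a b -> Hom a b -> Type;
  id1 : forall a : Ob, Hom a a;
  comp1 : forall {a b c : Ob}, Hom b c -> Hom a b -> Hom a c;
  id2 : forall {a b : Ob} (f : Hom a b), Cell f f;
  vcomp : forall {a b : Ob} {f g h : Hom a b}, Cell g h -> Cell f g -> Cell f h;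
  hcomp : forall {a b c : Ob} {g g' : Hom b c} {f f' : Hom a b},
      Cell g g' -> Cell f f' -> Cell (comp1 g f) (comp1 g' f')
}.

Arguments Hom {p} _ _.
Arguments Cell {p a b} _ _.
Arguments id1 {p} _.
Arguments comp1 {p a b c} _ _.
Arguments id2 {p a b} _.
Arguments vcomp {p a b f g h} _ _.
Arguments hcomp {p a b c g g' f f'} _ _.

(** The identity 2-cell transported along an equality of 1-cells
    (used only to make the strict identifications of 1-cells explicit). *)
Definition eqcell {K : PreTwoCat} {a b : Ob K} {f g : Hom a b} (e : f = g)
  : Cell f g :=
  match e in _ = y return Cell f y with eq_refl => id2 f end.

(** * Axioms of a strict 2-category (a Cat-enriched category whose
    hom-categories have a *set* of objects: [hom_uip]). *)
Record is_TwoCat (K : PreTwoCat) : Prop := {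
  comp1_assoc : forall {a b c d : Ob K} (h : Hom c d) (g : Hom b c) (f : Hom a b),
      comp1 h (comp1 g f) = comp1 (comp1 h g) f;
  comp1_idl : forall {a b : Ob K} (f : Hom a b), comp1 (id1 b) f = f;
  comp1_idr : forall {a b : Ob K} (f : Hom a b), comp1 f (id1 a) = f;
  hom_uip : forall {a b : Ob K} (f g : Hom a b) (p q : f = g), p = q;
  vcomp_assoc : forall {a b : Ob K} (f g h i : Hom a b)
      (x : Cell h i) (y : Cell g h) (z : Cell f g),
      vcomp x (vcomp y z) = vcomp (vcomp x y) z;
  vcomp_idl : forall {a b : Ob K} (f g : Hom a b) (x : Cell f g), vcomp (id2 g) x = x;
  vcomp_idr : forall {a b : Ob K} (f g : Hom a b) (x : Cell f g), vcomp x (id2 f) = x;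
  hcomp_id2 : forall {a b c : Ob K} (g : Hom b c) (f : Hom a b),
      hcomp (id2 g) (id2 f) = id2 (comp1 g f);
  interchange : forall {a b c : Ob K} (g g' g'' : Hom b c) (f f' f'' : Hom a b)
      (x' : Cell g' g'') (x : Cell g g') (y' : Cell f' f'') (y : Cell f f'),
      hcomp (vcomp x' x) (vcomp y' y) = vcomp (hcomp x' y') (hcomp x y);
  hcomp_assoc : forall {a b c d : Ob K} (h h' : Hom c d) (g g' : Hom b c)
      (f f' : Hom a b) (x : Cell h h') (y : Cell g g') (z : Cell f f'),
      vcomp (eqcell (comp1_assoc h' g' f')) (hcomp x (hcomp y z))
      = vcomp (hcomp (hcomp x y) z) (eqcell (comp1_assoc h g f));
  hcomp_idl : forall {a b : Ob K} (f f' : Hom a b) (x : Cell f f'),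
      vcomp (eqcell (comp1_idl f')) (hcomp (id2 (id1 b)) x)
      = vcomp x (eqcell (comp1_idl f));
  hcomp_idr : forall {a b : Ob K} (f f' : Hom a b) (x : Cell f f'),
      vcomp (eqcell (comp1_idr f')) (hcomp x (id2 (id1 a)))
      = vcomp x (eqcell (comp1_idr f))
}.

Section TwoCatDefs.
Context {K : PreTwoCat} (HK : is_TwoCat K).

Definition lw {a b c : Ob K} (g : Hom b c) {f f' : Hom a b} (x : Cell f f')
  : Cell (comp1 g f) (comp1 g f') := hcomp (id2 g) x.
Definition rw {a b c : Ob K} {g g' : Hom b c} (x : Cell g g') (f : Hom a b)
  : Cell (comp1 g f) (comp1 g' f) := hcomp x (id2 f).

Definition is_monad {k : Ob K} (t : Hom k k) (mu : Cell (comp1 t t) t)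
  (eta : Cell (id1 k) t) : Prop :=
  vcomp mu (lw t mu)
    = vcomp mu (vcomp (rw mu t) (eqcell (comp1_assoc HK t t t)))
  /\ vcomp mu (vcomp (rw eta t) (eqcell (eq_sym (comp1_idl HK t)))) = id2 t
  /\ vcomp mu (vcomp (lw t eta) (eqcell (eq_sym (comp1_idr HK t)))) = id2 t.

Definition is_EMw_1cell {k k' : Ob K}
  (t : Hom k k) (mu : Cell (comp1 t t) t)
  (t' : Hom k' k') (mu' : Cell (comp1 t' t') t')
  (V : Hom k k') (psi : Cell (comp1 t' V) (comp1 V t)) : Prop :=
  vcomp (lw V mu) (vcomp (eqcell (eq_sym (comp1_assoc HK V t t)))
    (vcomp (rw psi t) (vcomp (eqcell (comp1_assoc HK t' V t)) (lw t' psi))))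
  = vcomp psi (vcomp (rw mu' V) (eqcell (comp1_assoc HK t' t' V))).

Lemma res_eq_tt {k j : Ob K} (t : Hom k k) (f : Hom k j) (v : Hom j k) :
  t = comp1 v f -> comp1 t t = comp1 (comp1 v (comp1 f v)) f.
Proof.
  intros Ht; subst t.
  rewrite <- (comp1_assoc HK v f (comp1 v f)).
  rewrite (comp1_assoc HK f v f).
  rewrite (comp1_assoc HK v (comp1 f v) f).
  reflexivity.
Qed.

Lemma res_eq_t {k j : Ob K} (t : Hom k k) (f : Hom k j) (v : Hom j k) :
  t = comp1 v f -> comp1 (comp1 v (id1 j)) f = t.
Proof. intros Ht; rewrite (comp1_idr HK v); symmetry; exact Ht. Qed.

Lemma res_eq_Vtv {k j k' : Ob K} (t : Hom k k) (f : Hom k j) (v : Hom j k)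
  (V : Hom k k') :
  t = comp1 v f -> comp1 (comp1 V t) v = comp1 (comp1 V v) (comp1 f v).
Proof.
  intros Ht; subst t.
  rewrite (comp1_assoc HK V v f).
  rewrite <- (comp1_assoc HK (comp1 V v) f v).
  reflexivity.
Qed.

Definition res_unit {k j : Ob K} (t : Hom k k) (f : Hom k j) (v : Hom j k)
  (Ht : t = comp1 v f) (eta : Cell (id1 k) t) : Cell (id1 k) (comp1 v f) :=
  vcomp (eqcell Ht) eta.

Definition is_resolution {k j : Ob K} (t : Hom k k) (mu : Cell (comp1 t t) t)
  (eta : Cell (id1 k) t) (f : Hom k j) (v : Hom j k)
  (eps : Cell (comp1 f v) (id1 j)) (Ht : t = comp1 v f) : Prop :=
  mu = vcomp (eqcell (res_eq_t Ht)) (vcomp (rw (lw v eps) f) (eqcell (res_eq_tt Ht)))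
  /\ vcomp (eqcell (comp1_idl HK f)) (vcomp (rw eps f)
       (vcomp (eqcell (comp1_assoc HK f v f))
         (vcomp (lw f (res_unit Ht eta)) (eqcell (eq_sym (comp1_idr HK f))))))
     = id2 f
  /\ vcomp (eqcell (comp1_idr HK v)) (vcomp (lw v eps)
       (vcomp (eqcell (eq_sym (comp1_assoc HK v f v)))
         (vcomp (rw (res_unit Ht eta) v) (eqcell (eq_sym (comp1_idl HK v))))))
     = id2 v.

Definition cell_eta'Vv {k j k' : Ob K} (t' : Hom k' k') (eta' : Cell (id1 k') t')
  (V : Hom k k') (v : Hom j k) : Cell (comp1 V v) (comp1 t' (comp1 V v)) :=
  vcomp (rw eta' (comp1 V v)) (eqcell (eq_sym (comp1_idl HK (comp1 V v)))).

Definition cell_psiv {k j k' : Ob K} (t : Hom k k) (t' : Hom k' k')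
  (V : Hom k k') (psi : Cell (comp1 t' V) (comp1 V t)) (v : Hom j k)
  : Cell (comp1 t' (comp1 V v)) (comp1 (comp1 V t) v) :=
  vcomp (rw psi v) (eqcell (comp1_assoc HK t' V v)).

Definition cell_Vveps {k j k' : Ob K} (t : Hom k k) (f : Hom k j) (v : Hom j k)
  (Ht : t = comp1 v f) (eps : Cell (comp1 f v) (id1 j)) (V : Hom k k')
  : Cell (comp1 (comp1 V t) v) (comp1 V v) :=
  vcomp (eqcell (comp1_idr HK (comp1 V v)))
    (vcomp (lw (comp1 V v) eps) (eqcell (res_eq_Vtv V Ht))).

End TwoCatDefs.

(* Main.v *)
Require Import Defs.
From Stdlib Require Import ClassicalEpsilon Eqdep.

Section Frame.
Context {K : PreTwoCat} (HK : is_TwoCat K).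

Definition P (a b : Ob K) := {f : @Hom K a b & {g : @Hom K a b & option (Cell f g)}}.
Definition src {a b} (X : P a b) : @Hom K a b := projT1 X.
Definition tgt {a b} (X : P a b) : @Hom K a b := projT1 (projT2 X).
Definition cof {a b} (X : P a b) : option (Cell (src X) (tgt X)) := projT2 (projT2 X).
Definition pk {a b} {f g : @Hom K a b} (x : Cell f g) : P a b :=
  existT _ f (existT _ g (Some x)).
Definition pid {a b} (f : @Hom K a b) : P a b := pk (id2 f).

Definition pv {a b} (X Y : P a b) : P a b :=
  existT _ (src Y) (existT _ (tgt X)
   (match excluded_middle_informative (tgt Y = src X) with
    | left p => match cof X, cof Y with
                | Some x, Some y => Some (vcomp x (vcomp (eqcell p) y))
                | _, _ => None end
    | right _ => None end)).

Definition ph {a b c} (X : P b c) (Y : P a b) : P a c :=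
  existT _ (comp1 (src X) (src Y)) (existT _ (comp1 (tgt X) (tgt Y))
   (match cof X, cof Y with
    | Some x, Some y => Some (hcomp x y)
    | _, _ => None end)).

Lemma pk_inj {a b} {f g : @Hom K a b} (x y : Cell f g) : pk x = pk y -> x = y.
Proof.
  unfold pk; intro H. apply inj_pair2 in H. apply inj_pair2 in H.
  injection H; auto.
Qed.

Lemma uipr {a b} {f : @Hom K a b} (p : f = f) : p = eq_refl.
Proof. apply (hom_uip HK). Qed.

Lemma pk_v {a b} {f g h : @Hom K a b} (x : Cell g h) (y : Cell f g) :
  pk (vcomp x y) = pv (pk x) (pk y).
Proof.
  unfold pv, src, tgt, cof, pk; simpl.
  destruct (excluded_middle_informative (g = g)) as [p|n]; [|contradiction].
  rewrite (uipr p); simpl. rewrite (vcomp_idl HK). reflexivity.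
Qed.

Lemma pk_h {a b c} {g g' : @Hom K b c} {f f' : @Hom K a b} (x : Cell g g') (y : Cell f f') :
  pk (hcomp x y) = ph (pk x) (pk y).
Proof. reflexivity. Qed.

Lemma pk_ec {a b} {f g : @Hom K a b} (p : f = g) : pk (eqcell p) = pid f.
Proof. destruct p; reflexivity. Qed.

Lemma pk_id {a b} (f : @Hom K a b) : pk (id2 f) = pid f.
Proof. reflexivity. Qed.

Ltac dP X := let f := fresh "f" in let g := fresh "g" in let x := fresh "x" in
  destruct X as [f [g [x|]]].
Ltac dem := match goal with |- context [excluded_middle_informative ?Q] =>
  let p := fresh "p" in let n := fresh "n" in
  destruct (excluded_middle_informative Q) as [p|n];
   [ try (rewrite (uipr p)) | ] end.

Ltac fin := cbn [eqcell] in *; repeat rewrite ?(vcomp_idl HK), ?(vcomp_idr HK), ?(vcomp_assoc HK); reflexivity.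

Lemma pv_assoc {a b} (X Y Z : P a b) : pv X (pv Y Z) = pv (pv X Y) Z.
Proof.
  dP X; dP Y; dP Z; unfold pv, src, tgt, cof; simpl;
  repeat (dem; simpl; try subst); try contradiction; try reflexivity; fin.
Qed.

Ltac cs := cbn [src tgt cof pv ph pk pid projT1 projT2] in *.

Lemma pv_idl {a b} (g : @Hom K a b) (X : P a b) : tgt X = g -> pv (pid g) X = X.
Proof.
  dP X; cs; intro H; subst; unfold pv; cs; dem; simpl; try contradiction; try reflexivity; fin.
Qed.

Lemma pv_idr {a b} (g : @Hom K a b) (X : P a b) : src X = g -> pv X (pid g) = X.
Proof.
  dP X; cs; intro H; subst; unfold pv; cs; dem; simpl; try contradiction; try reflexivity; fin.
Qed.

Lemma xchg {a b c} (X X' : P b c) (Y Y' : P a b) :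
  tgt X = src X' -> tgt Y = src Y' -> ph (pv X' X) (pv Y' Y) = pv (ph X' Y') (ph X Y).
Proof.
  dP X; dP X'; dP Y; dP Y'; cs; intros H1 H2; subst; unfold pv, ph; cs;
  repeat (dem; simpl; try contradiction); try reflexivity;
  cbn [eqcell]; rewrite ?(vcomp_idl HK), ?(hcomp_id2 HK); try rewrite (interchange HK); try reflexivity.
Qed.

Lemma ph_pid {a b c} (g : @Hom K b c) (f : @Hom K a b) : ph (pid g) (pid f) = pid (comp1 g f).
Proof. unfold ph, pid, pk; cs. rewrite (hcomp_id2 HK). reflexivity. Qed.

Lemma pid_eq {a b} (f g : @Hom K a b) : f = g -> pid f = pid g.
Proof. intro; subst; reflexivity. Qed.

Lemma none_eq {a b} (f f' g g' : @Hom K a b) : f = f' -> g = g' ->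
  (existT _ f (existT _ g None) : P a b) = existT _ f' (existT _ g' None).
Proof. intros; subst; reflexivity. Qed.

Lemma ph_assoc {a b c d} (X : P c d) (Y : P b c) (Z : P a b) :
  ph X (ph Y Z) = ph (ph X Y) Z.
Proof.
  dP X; dP Y; dP Z; unfold ph; cs; try (apply none_eq; apply (comp1_assoc HK)).
  pose proof (f_equal pk (hcomp_assoc HK x x0 x1)) as E.
  rewrite !pk_v, !pk_ec in E.
  rewrite pv_idl in E by (cs; reflexivity).
  rewrite pv_idr in E by (cs; symmetry; apply (comp1_assoc HK)).
  exact E.
Qed.

Lemma ph_idl {a b} (X : P a b) : ph (pid (id1 b)) X = X.
Proof.
  dP X; unfold ph; cs; try (apply none_eq; apply (comp1_idl HK)).
  pose proof (f_equal pk (hcomp_idl HK x)) as E.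
  rewrite !pk_v, !pk_ec in E.
  rewrite pv_idl in E by (cs; reflexivity).
  rewrite pv_idr in E by (cs; symmetry; apply (comp1_idl HK)).
  exact E.
Qed.

Lemma ph_idr {a b} (X : P a b) : ph X (pid (id1 a)) = X.
Proof.
  dP X; unfold ph; cs; try (apply none_eq; apply (comp1_idr HK)).
  pose proof (f_equal pk (hcomp_idr HK x)) as E.
  rewrite !pk_v, !pk_ec in E.
  rewrite pv_idl in E by (cs; reflexivity).
  rewrite pv_idr in E by (cs; symmetry; apply (comp1_idr HK)).
  exact E.
Qed.


Lemma slide1 {a b c} (X : P b c) (Y : P a b) g f :
  tgt Y = g -> src X = f -> ph X Y = pv (ph X (pid g)) (ph (pid f) Y).
Proof.
  intros H1 H2.
  rewrite <- (xchg (pid f) X Y (pid g)) by (cs; congruence).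
  rewrite pv_idr by (cs; congruence). rewrite pv_idl by (cs; congruence). reflexivity.
Qed.

Lemma slide2 {a b c} (X : P b c) (Y : P a b) g f :
  tgt X = g -> src Y = f -> ph X Y = pv (ph (pid g) Y) (ph X (pid f)).
Proof.
  intros H1 H2.
  rewrite <- (xchg X (pid g) (pid f) Y) by (cs; congruence).
  rewrite pv_idr by (cs; congruence). rewrite pv_idl by (cs; congruence). reflexivity.
Qed.

Lemma whr {a b c} (A B : P b c) (g : @Hom K a b) :
  tgt B = src A -> pv (ph A (pid g)) (ph B (pid g)) = ph (pv A B) (pid g).
Proof.
  intros H. rewrite <- (xchg B A (pid g) (pid g)) by (cs; auto).
  rewrite pv_idl by (cs; auto). reflexivity.
Qed.

Lemma whl {a b c} (A B : P a b) (g : @Hom K b c) :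
  tgt B = src A -> pv (ph (pid g) A) (ph (pid g) B) = ph (pid g) (pv A B).
Proof.
  intros H. rewrite <- (xchg (pid g) (pid g) B A) by (cs; auto).
  rewrite pv_idl by (cs; auto). reflexivity.
Qed.

End Frame.

Ltac hnorm HK := repeat progress (repeat rewrite <- (comp1_assoc HK); repeat rewrite (comp1_idl HK); repeat rewrite (comp1_idr HK)).
Ltac sc HK := repeat match goal with | x := _ |- _ => progress unfold x end; cbn [src tgt cof pv ph pk pid projT1 projT2]; hnorm HK; reflexivity.
Ltac toPn HK H := unfold cell_Vveps, cell_psiv, cell_eta'Vv, res_unit; unfold lw, rw in H;
  repeat (rewrite (pk_v HK) in H || rewrite pk_h in H || rewrite pk_ec in H || rewrite pk_id in H);
  repeat (rewrite (pv_idl HK) in H by sc HK); repeat (rewrite (pv_idr HK) in H by sc HK).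
Ltac toP HK H := apply (f_equal pk) in H; toPn HK H.
Ltac toPg HK := apply pk_inj; unfold cell_Vveps, cell_psiv, cell_eta'Vv, res_unit; unfold lw, rw;
  repeat (rewrite (pk_v HK) || rewrite pk_h || rewrite pk_ec || rewrite pk_id);
  repeat (rewrite (pv_idl HK) by sc HK); repeat (rewrite (pv_idr HK) by sc HK).

Lemma phw {K : PreTwoCat} (HK : is_TwoCat K) {a b c d : Ob K} (g : Hom c d) (h : Hom b c) (X : P a b) :
  ph (pid g) (ph (pid h) X) = ph (pid (comp1 g h)) X.
Proof. rewrite (ph_assoc HK), (ph_pid HK). reflexivity. Qed.

Theorem lemma3p2 (K : PreTwoCat) (HK : is_TwoCat K)
  (k k' j : Ob K)
  (t : Hom k k) (mu : Cell (comp1 t t) t) (eta : Cell (id1 k) t)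
  (t' : Hom k' k') (mu' : Cell (comp1 t' t') t') (eta' : Cell (id1 k') t')
  (Hmon : is_monad HK mu eta) (Hmon' : is_monad HK mu' eta')
  (V : Hom k k') (psi : Cell (comp1 t' V) (comp1 V t))
  (Hpsi : is_EMw_1cell HK mu mu' psi)
  (f : Hom k j) (v : Hom j k) (eps : Cell (comp1 f v) (id1 j))
  (Ht : t = comp1 v f)
  (Hres : is_resolution HK mu eta eps Ht) :
  let e := vcomp (cell_Vveps HK Ht eps V)
             (vcomp (cell_psiv HK psi v) (cell_eta'Vv HK eta' V v)) in
  vcomp e e = e
  /\ vcomp (lw V mu)
       (vcomp (eqcell (eq_sym (comp1_assoc HK V t t)))
         (vcomp (rw psi t)
           (vcomp (eqcell (comp1_assoc HK t' V t))
             (vcomp (rw eta' (comp1 V t))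
               (vcomp (eqcell (eq_sym (comp1_idl HK (comp1 V t)))) psi)))))
     = psi
  /\ vcomp (cell_Vveps HK Ht eps V)
       (vcomp (cell_psiv HK psi v)
         (vcomp (lw t' (cell_Vveps HK Ht eps V))
           (vcomp (lw t' (cell_psiv HK psi v))
             (lw t' (cell_eta'Vv HK eta' V v)))))
     = vcomp (cell_Vveps HK Ht eps V) (cell_psiv HK psi v).
Proof.
  intros e; subst e.
  destruct Hmon' as [_ [Hl Hr]]. destruct Hres as [Hm _].
  unfold is_EMw_1cell in Hpsi.
  subst t.
  toP HK Hl. toP HK Hr. toP HK Hm. toP HK Hpsi.
  set (eh := ph (pid v) (pk eps)).
  assert (B3 : pv eh (ph (pid (comp1 v f)) eh) = pv eh (ph (pk mu) (pid v))).
  { rewrite Hm, <- (ph_assoc HK), (ph_pid HK).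
    rewrite <- (phw HK v f eh). unfold eh.
    rewrite (whl HK) by sc HK.
    rewrite <- (ph_assoc HK (pid v) (pk eps)).
    rewrite (whl HK) by sc HK.
    rewrite (phw HK f v).
    f_equal.
    transitivity (ph (pk eps) (pk eps)).
    - rewrite (slide1 HK (pk eps) (pk eps) (id1 j) (comp1 f v)) by sc HK.
      rewrite (ph_idr HK). reflexivity.
    - rewrite (slide2 HK (pk eps) (pk eps) (id1 j) (comp1 f v)) by sc HK.
      rewrite (ph_idl HK). reflexivity. }
  assert (B1 : pv (ph (pk psi) (pid v)) (ph (pid t') (ph (pid (comp1 V v)) (pk eps)))
     = pv (ph (pid (comp1 V (comp1 v f))) eh) (ph (pk psi) (pid (comp1 v (comp1 f v))))).
  { transitivity (ph (pk psi) eh).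
    - rewrite (slide1 HK (pk psi) eh v (comp1 t' V)) by sc HK.
      f_equal. rewrite <- (phw HK V v (pk eps)), (phw HK t' V). reflexivity.
    - apply (slide2 HK); sc HK. }
  assert (B2 : pv (ph (pid (comp1 V v)) (pk eps)) (ph (pid (comp1 V (comp1 v f))) eh)
     = ph (pid V) (pv eh (ph (pk mu) (pid v)))).
  { rewrite <- (phw HK V v (pk eps)), <- (phw HK V (comp1 v f) eh).
    fold eh. rewrite (whl HK) by sc HK. rewrite B3. reflexivity. }
  assert (C3 : pv (ph (pid (comp1 V v)) (pk eps)) (pv (ph (pk psi) (pid v))
     (pv (ph (pid t') (ph (pid (comp1 V v)) (pk eps)))
       (pv (ph (pid t') (ph (pk psi) (pid v))) (ph (pid t') (ph (pk eta') (pid (comp1 V v)))))))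
     = pv (ph (pid (comp1 V v)) (pk eps)) (ph (pk psi) (pid v))).
  { rewrite (pv_assoc HK (ph (pk psi) (pid v))), B1.
    rewrite <- (pv_assoc HK (ph (pid (comp1 V (comp1 v f))) eh)).
    rewrite (pv_assoc HK (ph (pid (comp1 V v)) (pk eps)) (ph (pid (comp1 V (comp1 v f))) eh)), B2.
    rewrite <- (whl HK) by sc HK.
    unfold eh. rewrite (phw HK V v).
    rewrite (ph_assoc HK (pid V) (pk mu) (pid v)).
    rewrite (pid_eq (comp1 v (comp1 f v)) (comp1 (comp1 v f) v)) by (hnorm HK; reflexivity).
    rewrite <- (ph_pid HK (comp1 v f) v), (ph_assoc HK (pk psi)).
    rewrite (ph_assoc HK (pid t') (pk psi) (pid v)).
    rewrite <- (ph_pid HK V v).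
    rewrite (ph_assoc HK (pid t') (pk eta') (ph (pid V) (pid v))).
    rewrite (ph_assoc HK (ph (pid t') (pk eta')) (pid V) (pid v)).
    repeat rewrite <- (pv_assoc HK).
    repeat (rewrite (whr HK) by sc HK).
    repeat rewrite (pv_assoc HK).
    rewrite (pv_assoc HK) in Hpsi. rewrite Hpsi.
    rewrite <- (pv_assoc HK (pk psi)).
    rewrite (whr HK) by sc HK.
    rewrite Hr, (ph_pid HK).
    rewrite (ph_pid HK t' V), (pv_idr HK) by sc HK. reflexivity. }
  clear B1 B2 B3.
  split; [|split]; toPg HK.
  -
    assert (D1 : pv (ph (pk eta') (pid (comp1 V v))) (ph (pid (comp1 V v)) (pk eps))
       = pv (ph (pid t') (ph (pid (comp1 V v)) (pk eps)))
            (ph (pk eta') (pid (comp1 (comp1 V v) (comp1 f v))))).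
    { transitivity (ph (pk eta') (ph (pid (comp1 V v)) (pk eps))).
      - rewrite (slide1 HK (pk eta') (ph (pid (comp1 V v)) (pk eps)) (comp1 V v) (id1 k')) by sc HK.
        rewrite (ph_idl HK). reflexivity.
      - apply (slide2 HK); sc HK. }
    assert (D2 : pv (ph (pk eta') (pid (comp1 (comp1 V v) (comp1 f v)))) (ph (pk psi) (pid v))
       = pv (ph (pid t') (ph (pk psi) (pid v)))
            (ph (pk eta') (pid (comp1 (comp1 t' V) v)))).
    { transitivity (ph (pk eta') (ph (pk psi) (pid v))).
      - rewrite (slide1 HK (pk eta') (ph (pk psi) (pid v)) (comp1 (comp1 V (comp1 v f)) v) (id1 k')) by sc HK.
        rewrite (ph_idl HK). f_equal. f_equal. apply pid_eq. hnorm HK; reflexivity.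
      - apply (slide2 HK); sc HK. }
    assert (D3 : pv (ph (pk eta') (pid (comp1 (comp1 t' V) v))) (ph (pk eta') (pid (comp1 V v)))
       = pv (ph (pid t') (ph (pk eta') (pid (comp1 V v))))
            (ph (pk eta') (pid (comp1 V v)))).
    { transitivity (ph (pk eta') (ph (pk eta') (pid (comp1 V v)))).
      - rewrite (slide1 HK (pk eta') (ph (pk eta') (pid (comp1 V v))) (comp1 (comp1 t' V) v) (id1 k')) by sc HK.
        rewrite (ph_idl HK). reflexivity.
      - apply (slide2 HK); sc HK. }
    repeat rewrite <- (pv_assoc HK).
    rewrite (pv_assoc HK (ph (pk eta') (pid (comp1 V v))) (ph (pid (comp1 V v)) (pk eps))), D1.
    repeat rewrite <- (pv_assoc HK).
    rewrite (pv_assoc HK (ph (pk eta') (pid (comp1 (comp1 V v) (comp1 f v)))) (ph (pk psi) (pid v))), D2.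
    repeat rewrite <- (pv_assoc HK).
    rewrite D3.
    repeat rewrite <- (pv_assoc HK).
    repeat rewrite (pv_assoc HK).
    repeat rewrite (pv_assoc HK) in C3.
    rewrite C3. reflexivity.
  -
    assert (A1 : pv (ph (pk eta') (pid (comp1 V (comp1 v f)))) (pk psi)
       = pv (ph (pid t') (pk psi)) (ph (pk eta') (pid (comp1 t' V)))).
    { transitivity (ph (pk eta') (pk psi)).
      - rewrite (slide1 HK (pk eta') (pk psi) (comp1 V (comp1 v f)) (id1 k')) by sc HK.
        rewrite (ph_idl HK). reflexivity.
      - apply (slide2 HK); sc HK. }
    rewrite A1.
    repeat rewrite (pv_assoc HK).
    repeat rewrite (pv_assoc HK) in Hpsi. rewrite Hpsi.
    rewrite <- (ph_pid HK t' V), (ph_assoc HK).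
    rewrite <- (pv_assoc HK).
    rewrite <- (xchg HK (ph (pk eta') (pid t')) (pk mu') (pid V) (pid V)) by sc HK.
    rewrite Hl. rewrite (pv_idl HK) by sc HK. rewrite (ph_pid HK).
    rewrite (pv_idr HK) by sc HK. reflexivity.
  - exact C3.
Qed.
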